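(* Let $G$ be a strongly Deza graph with parameters $(n,k,b,a)$ having exactly four distinct eigenvalues $k,\theta_2,\theta_3,\theta_4$ with positive multiplicities $1,m_2,m_3,m_4$, where $\theta_4=-\theta_3$ and $m_3=m_4$. Then $m_2\theta_2=-k$, and one of the following holds: (i) $m_2=1$, $\theta_2=-k$, and $G$ is bipartite with spectrum consisting of $k$ (multiplicity $1$), $\sqrt{k(n-2k)/(n-2)}$ (multiplicity $(n-2)/2$), $-\sqrt{k(n-2k)/(n-2)}$ (multiplicity $(n-2)/2$), and $-k$ (multiplicity $1$); (ii) $m_2=k$, $\theta_2=-1$, and the spectrum of $G$ consists of $k$ (multiplicity $1$), $\sqrt{k}$ (multiplicity $(n-k-1)/2$), $-1$ (multiplicity $k$), and $-\sqrt{k}$ (multiplicity $(n-k-1)/2$); (iii) $m_2<k$ and $\theta_2<-1$.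
   Context: All graphs are finite, simple and undirected; eigenvalues of a graph are those of its adjacency matrix. A Deza graph with parameters $(n,k,b,a)$, where $b\geqslant a$, is a $k$-regular graph on $n$ vertices, which is neither complete nor edgeless, such that any two distinct vertices have exactly $b$ or exactly $a$ common neighbours. If $b>a$, the children $G_A$ and $G_B$ of $G$ are the graphs on the vertex set of $G$ in which two distinct vertices are adjacent if and only if they have exactly $a$ (for $G_A$), respectively exactly $b$ (for $G_B$), common neighbours in $G$; if $b=a$, $G_A$ is the complete graph and $G_B$ is the edgeless graph. A strongly regular graph with parameters $(n,k,\lambda,\mu)$ is a $k$-regular graph on $n$ vertices, neither complete nor edgeless, in which any two adjacent vertices have exactly $\lambda$ common neighbours and any two distinct non-adjacent vertices have exactly $\mu$ common neighbours (disconnected examples, i.e. disjoint unions of at least two cliques of equal size, are allowed). A strongly Deza graph is a Deza graph both of whose children are strongly regular graphs. *)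

(* Defs.v *)
From mathcomp Require Import all_boot all_order all_algebra.
Set Implicit Arguments. Unset Strict Implicit. Unset Printing Implicit Defensive.
Import Order.TTheory GRing.Theory Num.Theory.

Section Graphs.
Variable n : nat.

Definition simple_graph (g : rel 'I_n) : Prop :=
  symmetric g /\ irreflexive g.

Definition complete_graph (g : rel 'I_n) : Prop :=
  forall x y, x != y -> g x y.

Definition edgeless (g : rel 'I_n) : Prop := forall x y, ~~ g x y.

Definition regular (g : rel 'I_n) (k : nat) : Prop :=
  forall x, #|[set y | g x y]| = k.

Definition common_nb (g : rel 'I_n) (x y : 'I_n) : nat :=
  #|[set z | g x z && g y z]|.

Definition deza_graph (g : rel 'I_n) (k b a : nat) : Prop :=
  [/\ simple_graph g, regular g k, ~ complete_graph g /\ ~ edgeless g,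
      (a <= b)%N &
      forall x y, x != y -> common_nb g x y = b \/ common_nb g x y = a].

Definition childA (g : rel 'I_n) (b a : nat) : rel 'I_n :=
  fun x y => if (a < b)%N then (x != y) && (common_nb g x y == a) else x != y.

Definition childB (g : rel 'I_n) (b a : nat) : rel 'I_n :=
  fun x y => if (a < b)%N then (x != y) && (common_nb g x y == b) else false.

Definition srg (g : rel 'I_n) (k lam mu : nat) : Prop :=
  [/\ simple_graph g, regular g k, ~ complete_graph g /\ ~ edgeless g,
      (forall x y, x != y -> g x y -> common_nb g x y = lam) &
      (forall x y, x != y -> ~~ g x y -> common_nb g x y = mu)].

Definition strongly_regular (g : rel 'I_n) : Prop :=
  exists k lam mu, srg g k lam mu.

Definition strongly_deza (g : rel 'I_n) (k b a : nat) : Prop :=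
  [/\ deza_graph g k b a, strongly_regular (childA g b a)
    & strongly_regular (childB g b a)].

Definition bipartite (g : rel 'I_n) : Prop :=
  exists f : 'I_n -> bool, forall x y, g x y -> f x != f y.

Definition adjmx (R : nzRingType) (g : rel 'I_n) : 'M[R]_n :=
  (\matrix_(i, j) (g i j)%:R)%R.

End Graphs.

(* Main.v *)
Require Import Defs.
From mathcomp Require Import all_boot all_order all_algebra all_field.
From mathcomp Require Import ring zify.
Import Order.TTheory GRing.Theory Num.Theory.
Local Open Scope ring_scope.

Lemma trace_roots (R : fieldType) n (M : 'M[R]_n) (s : seq R) :
  char_poly M = \prod_(x <- s) ('X - x%:P) -> \tr M = \sum_(x <- s) x.
Proof.
move=> E.
have Hs : size s = n.
  have := size_char_poly M; rewrite E size_prod_XsubC; by case.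
case: n M E Hs => [|n] M E Hs.
  by case: s E Hs => [|? ?] //= _ _; rewrite /mxtrace big_ord0 big_nil.
have := char_poly_trace M (ltn0Sn n); rewrite E /=.
have := coefPn_prod_XsubC (ps:=s); rewrite Hs /= => -> //.
by move/eqP; rewrite eqr_opp => /eqP.
Qed.

Lemma charpoly_sq (R : fieldType) n (M : 'M[R]_n) :
  char_poly (M *m M) \Po 'X^2 =
    (-1) ^+ n * (char_poly M * (char_poly M \Po - 'X)).
Proof.
rewrite /char_poly /char_poly_mx.
rewrite -det_map_mx.
set B := map_mx polyC M.
have -> : map_mx (comp_poly 'X^2) ('X%:M - map_mx polyC (M *m M))
   = ('X%:M - B) *m ('X%:M + B).
  rewrite mulmxDr !mulmxBl [B *m _]scalar_mxC addrA subrK -scalar_mxM -expr2.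
  rewrite map_mxB map_scalar_mx /= comp_polyX -map_mx_comp.
  congr (_ - _); rewrite -map_mxM; apply: eq_map_mx => x /=; exact: comp_polyC.
rewrite det_mulmx -det_map_mx map_mxB map_scalar_mx /= comp_polyX -map_mx_comp.
have -> : map_mx (comp_poly (- 'X) \o polyC) M = B.
  by apply: eq_map_mx => x /=; exact: comp_polyC.
have -> : (- 'X)%:M - B = (-1) *: ('X%:M + B).
  by rewrite scaleN1r opprD raddfN.
have ss : (-1)^+n * (-1)^+n = 1 :> {poly R}.
  by rewrite -exprD -signr_odd oddD addbb.
rewrite detZ [X in _ = X]mulrCA [X in _ = _ * X]mulrA ss mul1r.
by [].
Qed.


Lemma prod_sq_aux (R : fieldType) (s : seq R) :
  (-1) ^+ size s * (\prod_(x <- s) ('X - x%:P) * (\prod_(x <- s) ('X - x%:P) \Po - 'X))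
  = \prod_(x <- s) ('X - (x ^+ 2)%:P) \Po 'X^2.
Proof.
elim: s => [|x t IH]; first by rewrite !big_nil !rmorph1 expr0 !mul1r.
rewrite !big_cons !comp_polyM -IH !comp_polyB comp_polyX !comp_polyC rmorphXn /=.
rewrite comp_polyX exprS; ring.
Qed.

Lemma trace_sq_roots (R : fieldType) n (M : 'M[R]_n) (s : seq R) :
  char_poly M = \prod_(x <- s) ('X - x%:P) ->
  \tr (M *m M) = \sum_(x <- s) x ^+ 2.
Proof.
move=> E.
have Hs : size s = n.
  have := size_char_poly M; rewrite E size_prod_XsubC; by case.
have H := @charpoly_sq _ _ M; rewrite E -[X in (-1) ^+ X]Hs prod_sq_aux in H.
have E2 : char_poly (M *m M) = \prod_(x <- s) ('X - (x ^+ 2)%:P).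
  apply/polyP => i.
  have := congr1 (fun p : {poly R} => p`_(i * 2)) H => /=.
  by rewrite !coef_comp_poly_Xn // dvdn_mull // mulnK.
have E3 : char_poly (M *m M) = \prod_(y <- [seq x ^+ 2 | x <- s]) ('X - y%:P).
  by rewrite big_map.
by rewrite (@trace_roots _ _ _ _ E3) big_map.
Qed.
Lemma root_ratr (R : numFieldType) (P : {poly int}) (z : rat) :
  root (map_poly intr P : {poly R}) (ratr z) = root (map_poly intr P) z.
Proof.
rewrite -(fmorph_root (ratr : {rmorphism rat -> R})) -map_poly_comp.
congr root; apply: eq_map_poly => x /=; by rewrite ratr_int.
Qed.

Lemma rat_root_int (R : numFieldType) (P : {poly int}) (z : rat) :
  P \is monic -> root (map_poly intr P : {poly R}) (ratr z) ->
  exists w : int, z = w%:~R.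
Proof.
move=> mP; rewrite root_ratr -(root_ratr algC) => Hr.
have HA : (ratr z : algC) \in Aint.
  apply: root_monic_Aint Hr _ _; first exact: monic_map.
  apply/polyOverP => i; rewrite coef_map /=; exact: rpred_int.
have /intrP [w Hw] := Cint_rat_Aint (Crat_rat z) HA.
exists w; apply: (fmorph_inj (ratr : {rmorphism rat -> algC})).
by rewrite /= Hw ratr_int.
Qed.
Lemma adj_tr0 (R : nzRingType) n (g : rel 'I_n) :
  simple_graph g -> \tr (adjmx R g) = 0.
Proof.
move=> [_ irr]; rewrite /mxtrace big1 // => i _; by rewrite mxE irr.
Qed.

Lemma adj_tr2 (R : nzRingType) n (g : rel 'I_n) k :
  simple_graph g -> regular g k -> \tr (adjmx R g *m adjmx R g) = (n * k)%:R.
Proof.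
move=> [sym _] reg; rewrite /mxtrace.
transitivity (\sum_(i < n) (k%:R : R)); last by rewrite sumr_const card_ord -mulrnA mulnC.
apply: eq_bigr => i _; rewrite mxE.
transitivity (\sum_(j < n) ((g i j : nat)%:R : R)).
  apply: eq_bigr => j _; rewrite !mxE (sym j i). by case: (g i j); rewrite ?mulr1 ?mulr0.
rewrite -natr_sum -(reg i) cardsE -sum1_card big_mkcond /=.
congr (_%:R); rewrite [RHS]big_mkcond; apply: congr_big => // j _; rewrite unfold_in; by case: (g i j).
Qed.

Lemma prod_nseq (R : comNzRingType) (x : R) m :
  \prod_(y <- nseq m x) ('X - y%:P) = ('X - x%:P) ^+ m.
Proof. by elim: m => [|m IH]; rewrite ?big_nil ?expr0 // big_cons IH exprS. Qed.

Lemma sum_nseq (R : nmodType) (x : R) m : \sum_(y <- nseq m x) y = x *+ m.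
Proof. by elim: m => [|m IH]; rewrite ?big_nil ?mulr0n // big_cons IH mulrS. Qed.

Lemma sum_nseq2 (R : pzRingType) (x : R) m :
  \sum_(y <- nseq m x) y ^+ 2 = x ^+ 2 *+ m.
Proof. by elim: m => [|m IH]; rewrite ?big_nil ?mulr0n // big_cons IH mulrS. Qed.

Theorem theorem8 (R : rcfType) (n : nat) (g : rel 'I_n) (k b a : nat)
  (th2 th3 th4 : R) (m2 m3 m4 : nat) :
  strongly_deza g k b a ->
  uniq [:: k%:R; th2; th3; th4] ->
  (0 < m2)%N -> (0 < m3)%N -> (0 < m4)%N ->
  char_poly (adjmx R g) =
    ('X - k%:R%:P) * ('X - th2%:P) ^+ m2 * ('X - th3%:P) ^+ m3
      * ('X - th4%:P) ^+ m4 ->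
  th4 = - th3 -> m3 = m4 ->
  m2%:R * th2 = - k%:R /\
  [\/ [/\ m2 = 1%N, th2 = - k%:R, bipartite g &
        exists2 m : nat, (m * 2 = n - 2)%N &
          let s := Num.sqrt (k%:R * (n%:R - 2 * k%:R) / (n%:R - 2)) in
          char_poly (adjmx R g) =
            ('X - k%:R%:P) * ('X - s%:P) ^+ m * ('X + s%:P) ^+ m
              * ('X + k%:R%:P)],
      [/\ m2 = k, th2 = -1 &
        exists2 m : nat, (m * 2 = n - k - 1)%N &
          char_poly (adjmx R g) =
            ('X - k%:R%:P) * ('X - (Num.sqrt k%:R)%:P) ^+ m
              * ('X + 1) ^+ k * ('X + (Num.sqrt k%:R)%:P) ^+ m]
    | (m2 < k)%N /\ th2 < -1].
Proof.
move=> [[sg reg _ _ _] _ _] Hu m2p m3p m4p Hch E4 E34.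
set A := adjmx R g.
set s := k%:R :: nseq m2 th2 ++ nseq m3 th3 ++ nseq m4 th4.
have Hs : char_poly A = \prod_(x <- s) ('X - x%:P).
  by rewrite Hch big_cons !big_cat !prod_nseq /= !mulrA.
have Hn : n = (1 + m2 + m3 + m4)%N.
  have := size_char_poly A; rewrite Hs size_prod_XsubC /= !size_cat !size_nseq.
  move=> H; lia.
have T1 := @trace_roots _ _ _ _ Hs.
rewrite adj_tr0 // big_cons !big_cat !sum_nseq /= in T1.
have T2 := @trace_sq_roots _ _ _ _ Hs.
rewrite (@adj_tr2 _ _ _ _ sg reg) big_cons !big_cat !sum_nseq2 /= in T2.
have Hm2 : m2%:R * th2 = - k%:R.
  move: T1; rewrite E4 -E34 mulNrn subrr addr0 -mulr_natl => /eqP.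
  rewrite eq_sym addr_eq0 => /eqP H; rewrite mulr1 in H; by rewrite mulr1 H opprK mulr_natl.
have Hmat : A = map_mx intr (adjmx int g).
  by apply/matrixP => i j; rewrite !mxE; case: (g i j).
have HP : char_poly A = map_poly intr (char_poly (adjmx int g)).
  by rewrite Hmat map_char_poly.
have Hroot : root (char_poly A) th2.
  rewrite Hch; case: m2 m2p {Hm2 Hs s Hn T1 T2 Hch} => // m2' _.
  by rewrite !rootM root_exp_XsubC eqxx /= orbT.
have Hz : ratr (- (k%:R) / (m2%:R) : rat) = th2.
  rewrite fmorph_div rmorphN !rmorph_nat -Hm2 mulrC mulKf //.
  by rewrite pnatr_eq0 -lt0n.
have [w Hw] : exists w : int, (- (k%:R) / (m2%:R) : rat) = w%:~R.
  apply: (@rat_root_int R (char_poly (adjmx int g))); first exact: char_poly_monic.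
  by rewrite Hz -HP.
have {Hz} Hth2 : th2 = w%:~R by rewrite -Hz Hw ratr_int.
have Hwi : (m2%:Z * w = - k%:Z)%R.
  apply: (@intr_inj R); by rewrite intrM -Hth2 /= rmorphN /= -Hm2.
have Hk2 : (k%:R : R) != th2.
  by move: Hu => /= /andP [] /norP [].
have kp : (0 < k)%N.
  case: k Hk2 Hwi {Hch Hs s T1 T2 Hm2 HP Hroot Hw Hu reg} => // Hk2 Hwi.
  have w0 : w = 0 by lia.
  by move: Hk2; rewrite Hth2 w0 eqxx.
split => //.
have [w1|w2] : (w = -1 \/ w <= -2)%R by lia.
- have m2k : m2 = k by lia.
  have th2m : th2 = -1 by rewrite Hth2 w1.
  apply: Or32; split => //.
  exists m3; first lia.
  have Hsq : (m3%:R * 2) * (th3 ^+ 2 - k%:R) = 0 :> R.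
    rewrite -(subrr ((n * k)%:R : R)) {1}T2 th2m -m2k E4 Hn -E34.
    rewrite natrM !natrD -!(mulr_natr (_ ^+ 2)); ring.
  have Hsq3 : th3 ^+ 2 = k%:R.
    have h1 : (m3%:R : R) == 0 = false by rewrite pnatr_eq0; case: m3 m3p {E34 Hsq Hch Hs s Hn T2 T1}.
    have h2 : (2 : R) == 0 = false by rewrite pnatr_eq0.
    by move/eqP: Hsq; rewrite mulf_eq0 mulf_eq0 h1 h2 /= subr_eq0 => /eqP.
  set r := Num.sqrt (k%:R : R).
  have Hr : r ^+ 2 = k%:R by rewrite sqr_sqrtr // ler0n.
  have [Hr3|Hr3] : th3 = r \/ th3 = - r.
    have : (th3 - r) * (th3 + r) = 0 by rewrite -subr_sqr Hsq3 Hr subrr.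
    move/eqP; rewrite mulf_eq0 subr_eq0 addr_eq0 => /orP [] /eqP; by [left|right].
  - rewrite Hch th2m -m2k E4 -E34 Hr3 !polyCN !opprK polyC1.
    by congr (_ * _); rewrite mulrAC.
  - rewrite Hch th2m -m2k E4 -E34 Hr3 !polyCN !opprK polyC1.
    ring.
- apply: Or33; split; first nia.
  have -> : (-1 : R) = (-1 : int)%:~R by rewrite rmorphN rmorph1.
  by rewrite Hth2 ltr_int; lia.
Qed.
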